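(* For any $\mathsf{F_{<:}^\top}$ term-in-context $\Theta\vdash^\top t$, if $\Theta\vdash_M t:T$ then $T$ is a minimal type for $\mathsf{F_{<:}^\top}$.
   Context: System $\mathsf{F_{<:}^{K\top}}$: raw types $T ::= \top \mid X \mid T\to T \mid \forall^{\mathsf K}(X<:T).T \mid \forall^\top(X<:T).T$, up to $\alpha$-conversion. Contexts $\Theta$: finite sequences of $X<:T$ or $x:T$ with distinct variables, each type well-formed over the preceding part. Subtyping $\Theta\vdash S<:T$: (Var) $\Theta,X<:T,\Theta'\vdash X<:T$; (Top) $T<:\top$; (Refl); (Trans); ($\to$) from $S'<:S$, $T<:T'$ infer $S\to T<:S'\to T'$; ($\forall$-Fun) from $\Theta,X<:S\vdash T<:T'$ infer $\forall^{\mathsf K}(X<:S).T<:\forall^{\mathsf K}(X<:S).T'$; ($\forall$-Loc) from $\Theta\vdash T_0<:S_0$, $\Theta,X<:S_0\vdash S_1<:T_1$ infer $\forall^{\mathsf K}(X<:S_0).S_1<:\forall^\top(X<:T_0).T_1$; ($\forall$-Top) from $\Theta\vdash T_0<:S_0$, $\Theta,X<:\top\vdash S_1<:T_1$ infer $\forall^\top(X<:S_0).S_1<:\forall^\top(X<:T_0).T_1$. Raw terms $t ::= \mathsf{top}\mid x\mid\lambda(x:T).t\mid\Lambda(X<:T).t\mid t\,t\mid t\{T\}$. $\Theta^*(T)=\Theta^*(S)$ if $T\equiv X$ and $X<:S$ occurs in $\Theta$; $\Theta^*(T)=T$ otherwise. Minimal typing $\Theta\vdash_M t:T$: $\Theta,x:T,\Theta'\vdash_M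 x:T$; $\Theta\vdash_M\mathsf{top}:\top$; from $\Theta,x:S\vdash_M t:T$ infer $\Theta\vdash_M\lambda(x:S).t:S\to T$; from $\Theta\vdash_M r:R$, $\Theta\vdash_M s:S$, $\Theta\vdash S<:S'$ with $\Theta^*(R)=S'\to T$ infer $\Theta\vdash_M r\,s:T$; from $\Theta,X<:S\vdash_M t:T$ infer $\Theta\vdash_M\Lambda(X<:S).t:\forall^{\mathsf K}(X<:S).T$; from $\Theta\vdash_M r:R$, $\Theta\vdash S<:S'$ with $\Theta^*(R)=\forall^{\mathsf K}(X<:S').T$ or $\forall^\top(X<:S').T$ infer $\Theta\vdash_M r\{S\}:T[S/X]$. An $\mathsf{F_{<:}^\top}$ type is one containing only $\forall^\top$ quantifiers; an $\mathsf{F_{<:}^\top}$ term-in-context has context and type annotations consisting of $\mathsf{F_{<:}^\top}$ types. The minimal types for $\mathsf{F_{<:}^\top}$ are the $\mathsf{F_{<:}^{K\top}}$ types generated by $T ::= S \mid \forall^{\mathsf K}(X<:S).T \mid S\to T$, where $S$ ranges over $\mathsf{F_{<:}^\top}$ types. *)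

(* Defs.v *)
(* System F_{<:}^{K T} with de Bruijn indices (alpha-conversion
   handled by the representation).  A single context holds both type-variable
   bindings (X <: T) and term-variable bindings (x : T); indices count all
   bindings, most recent first (index 0 = head of the list). *)
From Stdlib Require Import List Arith.
Import ListNotations.

Inductive ty : Type :=
| TTop : ty
| TVar : nat -> ty
| TArr : ty -> ty -> ty
| TAllK : ty -> ty -> ty   (* forall^K (X <: S). T, T under the binder *)
| TAllT : ty -> ty -> ty.  (* forall^Top (X <: S). T, T under the binder *)

Inductive tm : Type :=
| ttop : tm
| tvar : nat -> tm
| tlam : ty -> tm -> tm
| ttlam : ty -> tm -> tm
| tapp : tm -> tm -> tm
| ttapp : tm -> ty -> tm.

Inductive binding : Type :=
| BSub : ty -> binding
| BVar : ty -> binding.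

Definition ctx := list binding.

Fixpoint tshift (c : nat) (T : ty) : ty :=
  match T with
  | TTop => TTop
  | TVar n => if n <? c then TVar n else TVar (S n)
  | TArr A B => TArr (tshift c A) (tshift c B)
  | TAllK A B => TAllK (tshift c A) (tshift (S c) B)
  | TAllT A B => TAllT (tshift c A) (tshift (S c) B)
  end.

Definition tshiftn (k : nat) (T : ty) : ty := Nat.iter k (tshift 0) T.

(* tsubst k U T : replace index k by U (U already lives in the context
   without the binder k), decrementing indices > k. T[S/X] = tsubst 0 S T. *)
Fixpoint tsubst (k : nat) (U : ty) (T : ty) : ty :=
  match T with
  | TTop => TTop
  | TVar n => if n <? k then TVar n else if n =? k then U else TVar (pred n)
  | TArr A B => TArr (tsubst k U A) (tsubst k U B)
  | TAllK A B => TAllK (tsubst k U A) (tsubst (S k) (tshift 0 U) B)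
  | TAllT A B => TAllT (tsubst k U A) (tsubst (S k) (tshift 0 U) B)
  end.

(* Theta^*(T): follow upper bounds of type variables *)
Fixpoint expose (G : ctx) (T : ty) {struct G} : ty :=
  match T with
  | TVar n =>
      match G, n with
      | BSub B :: G', 0 => tshift 0 (expose G' B)
      | _ :: G', S m => tshift 0 (expose G' (TVar m))
      | _, _ => T
      end
  | _ => T
  end.

Inductive wf_ty : ctx -> ty -> Prop :=
| wf_Top G : wf_ty G TTop
| wf_Var G n B : nth_error G n = Some (BSub B) -> wf_ty G (TVar n)
| wf_Arr G A B : wf_ty G A -> wf_ty G B -> wf_ty G (TArr A B)
| wf_AllK G A B : wf_ty G A -> wf_ty (BSub A :: G) B -> wf_ty G (TAllK A B)
| wf_AllT G A B : wf_ty G A -> wf_ty (BSub A :: G) B -> wf_ty G (TAllT A B).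

Inductive wf_ctx : ctx -> Prop :=
| wfc_nil : wf_ctx []
| wfc_sub G T : wf_ctx G -> wf_ty G T -> wf_ctx (BSub T :: G)
| wfc_var G T : wf_ctx G -> wf_ty G T -> wf_ctx (BVar T :: G).

Inductive wf_tm : ctx -> tm -> Prop :=
| wft_top G : wf_tm G ttop
| wft_var G n T : nth_error G n = Some (BVar T) -> wf_tm G (tvar n)
| wft_lam G T t : wf_ty G T -> wf_tm (BVar T :: G) t -> wf_tm G (tlam T t)
| wft_tlam G T t : wf_ty G T -> wf_tm (BSub T :: G) t -> wf_tm G (ttlam T t)
| wft_app G r s : wf_tm G r -> wf_tm G s -> wf_tm G (tapp r s)
| wft_tapp G r T : wf_tm G r -> wf_ty G T -> wf_tm G (ttapp r T).

Inductive sub : ctx -> ty -> ty -> Prop :=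
| S_Var G n B : nth_error G n = Some (BSub B) -> sub G (TVar n) (tshiftn (S n) B)
| S_Top G T : sub G T TTop
| S_Refl G T : sub G T T
| S_Trans G A B C : sub G A B -> sub G B C -> sub G A C
| S_Arr G S1 S2 T1 T2 : sub G S2 S1 -> sub G T1 T2 -> sub G (TArr S1 T1) (TArr S2 T2)
| S_AllFun G S0 T T' : sub (BSub S0 :: G) T T' -> sub G (TAllK S0 T) (TAllK S0 T')
| S_AllLoc G S0 S1 T0 T1 :
    sub G T0 S0 -> sub (BSub S0 :: G) S1 T1 -> sub G (TAllK S0 S1) (TAllT T0 T1)
| S_AllTop G S0 S1 T0 T1 :
    sub G T0 S0 -> sub (BSub TTop :: G) S1 T1 -> sub G (TAllT S0 S1) (TAllT T0 T1).

Inductive mtyp : ctx -> tm -> ty -> Prop :=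
| M_Var G n T : nth_error G n = Some (BVar T) -> mtyp G (tvar n) (tshiftn (S n) T)
| M_Top G : mtyp G ttop TTop
| M_Abs G S0 t T :
    (* the body type lives in G, x:S; it cannot mention the term variable x *)
    mtyp (BVar S0 :: G) t (tshift 0 T) -> mtyp G (tlam S0 t) (TArr S0 T)
| M_App G r s R S0 S' T :
    mtyp G r R -> mtyp G s S0 -> sub G S0 S' -> expose G R = TArr S' T ->
    mtyp G (tapp r s) T
| M_TAbs G S0 t T : mtyp (BSub S0 :: G) t T -> mtyp G (ttlam S0 t) (TAllK S0 T)
| M_TApp G r R S0 S' T :
    mtyp G r R -> sub G S0 S' ->
    (expose G R = TAllK S' T \/ expose G R = TAllT S' T) ->
    mtyp G (ttapp r S0) (tsubst 0 S0 T).

Fixpoint is_topty (T : ty) : Prop :=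
  match T with
  | TTop => True
  | TVar _ => True
  | TArr A B => is_topty A /\ is_topty B
  | TAllK _ _ => False
  | TAllT A B => is_topty A /\ is_topty B
  end.

Definition topty_binding (b : binding) : Prop :=
  match b with BSub T => is_topty T | BVar T => is_topty T end.

Definition topty_ctx (G : ctx) : Prop := Forall topty_binding G.

Fixpoint topty_tm (t : tm) : Prop :=
  match t with
  | ttop => True
  | tvar _ => True
  | tlam T b => is_topty T /\ topty_tm b
  | ttlam T b => is_topty T /\ topty_tm b
  | tapp r s => topty_tm r /\ topty_tm s
  | ttapp r T => topty_tm r /\ is_topty T
  end.

Inductive min_ty : ty -> Prop :=
| min_base S0 : is_topty S0 -> min_ty S0
| min_allK S0 T : is_topty S0 -> min_ty T -> min_ty (TAllK S0 T)
| min_arr S0 T : is_topty S0 -> min_ty T -> min_ty (TArr S0 T).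

(* Main.v *)
Require Import Defs.
From Stdlib Require Import List Arith Lia.
Import ListNotations.

Lemma topty_shift : forall T c, is_topty (tshift c T) <-> is_topty T.
Proof.
  induction T; intros c; simpl; try tauto.
  - destruct (n <? c); simpl; tauto.
  - rewrite IHT1, IHT2; tauto.
  - rewrite IHT1, IHT2; tauto.
Qed.

Lemma topty_shiftn : forall k T, is_topty T -> is_topty (tshiftn k T).
Proof.
  induction k; intros T H; simpl; auto.
  apply topty_shift. apply IHk; auto.
Qed.

Lemma min_unshift : forall T c, min_ty (tshift c T) -> min_ty T.
Proof.
  induction T; intros c H; simpl in H.
  - constructor; simpl; auto.
  - constructor; simpl; auto.
  - inversion H; subst.
    + constructor. apply (proj1 (topty_shift _ c)); simpl; auto.
    + apply min_arr. apply (proj1 (topty_shift _ c)); auto. eapply IHT2; eauto.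
  - inversion H; subst.
    + simpl in H0; contradiction.
    + apply min_allK. apply (proj1 (topty_shift _ c)); auto. eapply IHT2; eauto.
  - inversion H; subst.
    constructor. apply (proj1 (topty_shift _ c)); simpl; auto.
Qed.

Lemma topty_subst : forall T k U, is_topty T -> is_topty U -> is_topty (tsubst k U T).
Proof.
  induction T; intros k U HT HU; simpl in *; auto.
  - destruct (n <? k); simpl; auto. destruct (n =? k); simpl; auto.
  - destruct HT; split; auto.
  - destruct HT; split; auto. apply IHT2; auto. apply topty_shift; auto.
Qed.

Lemma min_subst : forall T, min_ty T -> forall k U, is_topty U -> min_ty (tsubst k U T).
Proof.
  induction 1; intros k U HU.
  - constructor. apply topty_subst; auto.
  - simpl. apply min_allK. apply topty_subst; auto. apply IHmin_ty. apply topty_shift; auto.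
  - simpl. apply min_arr. apply topty_subst; auto. apply IHmin_ty; auto.
Qed.

Lemma topty_expose : forall G T, topty_ctx G -> is_topty T -> is_topty (expose G T).
Proof.
  induction G as [|a G IH]; intros T HG HT.
  - destruct T; simpl; auto.
  - inversion HG; subst. destruct T; simpl; auto.
    destruct a, n; simpl; auto; apply topty_shift; apply IH; simpl; auto.
Qed.

Lemma expose_nonvar : forall G T, (forall n, T <> TVar n) -> expose G T = T.
Proof.
  intros G T H. destruct T; destruct G; try reflexivity;
  exfalso; eapply H; eauto.
Qed.

Lemma topty_nth : forall G n b, topty_ctx G -> nth_error G n = Some b -> topty_binding b.
Proof.
  intros G n b HG H. apply nth_error_In in H.
  unfold topty_ctx in HG. rewrite Forall_forall in HG. auto.
Qed.

Theorem lemma8p2 (G : ctx) (t : tm) (T : ty) :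
  wf_ctx G -> topty_ctx G -> wf_tm G t -> topty_tm t ->
  mtyp G t T -> min_ty T.
Proof.
  intros _ HG _ Ht H. revert HG Ht.
  induction H; intros HG Ht; simpl in Ht.
  - constructor. apply topty_shiftn. apply (topty_nth _ _ _ HG H).
  - constructor; simpl; auto.
  - destruct Ht as [H1 H2]. apply min_arr; auto.
    eapply min_unshift. apply IHmtyp; auto. constructor; auto.
  - destruct Ht as [H3 H4]. specialize (IHmtyp1 HG H3).
    destruct R.
    + rewrite expose_nonvar in H2 by discriminate. discriminate.
    + assert (is_topty (expose G (TVar n))) by (apply topty_expose; simpl; auto).
      rewrite H2 in H5. simpl in H5. constructor; tauto.
    + rewrite expose_nonvar in H2 by discriminate. injection H2; intros; subst.
      inversion IHmtyp1; subst; auto. constructor; simpl in *; tauto.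
    + rewrite expose_nonvar in H2 by discriminate. discriminate.
    + rewrite expose_nonvar in H2 by discriminate. discriminate.
  - destruct Ht as [H1 H2]. apply min_allK; auto. apply IHmtyp; auto. constructor; auto.
  - destruct Ht as [H3 H4]. specialize (IHmtyp HG H3).
    destruct R.
    + rewrite expose_nonvar in H1 by discriminate. destruct H1; discriminate.
    + assert (is_topty (expose G (TVar n))) by (apply topty_expose; simpl; auto).
      destruct H1 as [E|E]; rewrite E in H2; simpl in H2; [contradiction|].
      constructor. apply topty_subst; tauto.
    + rewrite expose_nonvar in H1 by discriminate. destruct H1; discriminate.
    + rewrite expose_nonvar in H1 by discriminate.
      destruct H1 as [E|E]; [|discriminate]. injection E; intros; subst.
      inversion IHmtyp; subst. simpl in *; contradiction.
      apply min_subst; auto.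
    + rewrite expose_nonvar in H1 by discriminate.
      destruct H1 as [E|E]; [discriminate|]. injection E; intros; subst.
      inversion IHmtyp; subst. constructor. apply topty_subst; simpl in *; tauto.
Qed.
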